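(* For all integers $0 \leq k \leq n$, \[ [2]_q^k\,[k]_{q^2}!\,S_B[n,k] \;=\; \sum_{\ell=0}^{k} q^{k(k-2\ell)}\,B_{n,\ell}(q)\,{n-\ell \brack k-\ell}_{q^2}. \]
   Context: For $k\ge 1$, $[k]_q=1+q+\dots+q^{k-1}$, $[0]_q=0$, $[n]_q!=[1]_q[2]_q\cdots[n]_q$ (with $[0]_q!=1$), and ${n\brack k}_q=\frac{[n]_q!}{[k]_q![n-k]_q!}$ for $0\le k\le n$; $[k]_{q^2}!$ and ${\cdot \brack \cdot}_{q^2}$ denote these with $q$ replaced by $q^2$. The type B $q$-Stirling numbers of the second kind $S_B[n,k]$ are defined by $S_B[0,k]=\delta_{0k}$ and $S_B[n,k]=S_B[n-1,k-1]+[2k+1]_q\,S_B[n-1,k]$ for $n\ge1$ (with $S_B[n-1,-1]=0$). Let $\mathcal{B}_n$ be the group of signed permutations of $[n]$, i.e. bijections $\pi$ of $\{\pm1,\dots,\pm n\}$ with $\pi(-i)=-\pi(i)$, written $\pi=\pi_1\cdots\pi_n$ with $\pi_i=\pi(i)$, integers ordered naturally $-n<\dots<-1<0<1<\dots<n$. Set $\pi_0=0$; $\mathrm{Des}_B(\pi)=\{i\in\{0,1,\dots,n-1\}:\pi_i>\pi_{i+1}\}$, $\mathrm{des}_B(\pi)=|\mathrm{Des}_B(\pi)|$, $\mathrm{neg}(\pi)=|\{i\in[n]:\pi_i<0\}|$, and the flag-major index $\mathrm{fmaj}(\pi)=\sum_{i\in\mathrm{Des}_B(\pi)}2i+\mathrm{neg}(\pi)$.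 Define $B_{n,k}(q)$ by $\sum_{\pi\in\mathcal{B}_n}t^{\mathrm{des}_B(\pi)}q^{\mathrm{fmaj}(\pi)}=\sum_{k=0}^n B_{n,k}(q)t^k$. *)

(* Defs.v *)
From HB Require Import structures.
From mathcomp Require Import all_boot all_order all_algebra.
From mathcomp Require Import fingroup perm.
From mathcomp Require Export fraction.
Set Implicit Arguments. Unset Strict Implicit. Unset Printing Implicit Defensive.
Import Order.TTheory GRing.Theory Num.Theory.
Local Open Scope ring_scope.

Definition qint (R : nzRingType) (q : R) (k : nat) : R := \sum_(i < k) q ^+ i.

Definition qfact (R : nzRingType) (q : R) (n : nat) : R :=
  \prod_(i < n) qint q i.+1.

(* q-binomial [n brack k]_q = [n]_q! / ([k]_q! [n-k]_q!) (used for k <= n) *)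
Definition qbinom (F : fieldType) (q : F) (n k : nat) : F :=
  qfact q n / (qfact q k * qfact q (n - k)).

Fixpoint SB (R : nzRingType) (q : R) (n k : nat) : R :=
  match n with
  | 0 => if k == 0%N then 1 else 0
  | n'.+1 =>
      (match k with 0 => 0 | k'.+1 => SB q n' k' end) + qint q (2 * k).+1 * SB q n' k
  end.

(* Signed permutations of [n]: a pair (s, e) encodes pi with
   pi_i = (-1)^(e (i-1)) * (s (i-1) + 1) for i = 1..n (0-based ordinals). *)
Definition signed_perm (n : nat) : finType :=
  ({perm 'I_n} * {ffun 'I_n -> bool})%type.

(* pi_i as an integer, with pi_0 = 0 (and 0 out of range) *)
Definition spval (n : nat) (p : signed_perm n) (i : nat) : int :=
  match i with
  | 0 => 0
  | j.+1 =>
      match @insub nat (fun x => (x < n)%N) 'I_n j with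
      | Some o => (if p.2 o then -1 else 1) * ((p.1 o : nat).+1)%:Z
      | None => 0
      end
  end.

Definition desB_set (n : nat) (p : signed_perm n) : seq nat :=
  [seq i <- iota 0 n | spval p i.+1 < spval p i].

Definition desB (n : nat) (p : signed_perm n) : nat := size (desB_set p).

Definition negB (n : nat) (p : signed_perm n) : nat := #|[set i : 'I_n | p.2 i]|.

Definition fmaj (n : nat) (p : signed_perm n) : nat :=
  (\sum_(i <- desB_set p) 2 * i + negB p)%N.

Definition desfmaj_poly (R : nzRingType) (q : R) (n : nat) : {poly R} :=
  \sum_(p : signed_perm n) 'X ^+ desB p * (q ^+ fmaj p)%:P.

Definition Bnk (R : nzRingType) (q : R) (n k : nat) : R := (desfmaj_poly q n)`_k.

(* Main.v *)
Require Import Defs.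
From HB Require Import structures.
From mathcomp Require Import all_boot all_order all_algebra.
From mathcomp Require Import fraction.
From mathcomp Require Import ring zify.
From mathcomp Require Import fingroup perm.
Import Order.TTheory GRing.Theory Num.Theory.
Local Open Scope ring_scope.

Set Implicit Arguments. Unset Strict Implicit. Unset Printing Implicit Defensive.

Section QInt.
Variable R : comNzRingType.
Implicit Types (q : R).

Lemma qint0 q : qint q 0 = 0.
Proof. by rewrite /qint big_ord0. Qed.

Lemma qintSr q n : qint q n.+1 = qint q n + q ^+ n.
Proof. by rewrite /qint big_ord_recr. Qed.

Lemma qint1 q : qint q 1 = 1.
Proof. by rewrite qintSr qint0 add0r expr0. Qed.

Lemma qintD q a b : qint q (a + b) = qint q a + q ^+ a * qint q b.
Proof.
elim: b => [|b IH]; first by rewrite addn0 qint0 mulr0 addr0.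
by rewrite addnS !qintSr IH exprD; ring.
Qed.

Lemma qint2 q : qint q 2 = 1 + q.
Proof. by rewrite qintSr qint1 expr1. Qed.

Lemma qint_closed q n : qint q n * (1 - q) = 1 - q ^+ n.
Proof.
elim: n => [|n IH]; first by rewrite qint0 mul0r expr0 subrr.
by rewrite qintSr mulrDl IH exprS; ring.
Qed.

Lemma qint_q2 q m : qint q 2 * qint (q ^+ 2) m = qint q (2 * m).
Proof.
elim: m => [|m IH]; first by rewrite !qint0 mulr0.
rewrite (qintSr (q ^+ 2)) mulrDr IH mulnS addnC qintD qint2 -exprM mulnC.
ring.
Qed.

Lemma qfactS q n : qfact q n.+1 = qfact q n * qint q n.+1.
Proof. by rewrite /qfact big_ord_recr. Qed.

Lemma qfact0 q : qfact q 0 = 1.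
Proof. by rewrite /qfact big_ord0. Qed.

End QInt.

Lemma qintE (F : fieldType) (x : F) a : 1 - x != 0 -> qint x a = (1 - x ^+ a) / (1 - x).
Proof. by move=> h; rewrite -qint_closed mulfK. Qed.

Section Field.
Variable F : fieldType.
Variable q : F.
Hypothesis hq : forall j, (0 < j)%N -> q ^+ j != 1.

Lemma onem_neq0 j : (0 < j)%N -> 1 - q ^+ j != 0.
Proof. by move=> /hq h; rewrite subr_eq0 eq_sym. Qed.

Lemma qintQ_neq0 i : qint (q ^+ 2) i.+1 != 0.
Proof.
apply/negP => /eqP h; have := qint_closed (q ^+ 2) i.+1.
rewrite h mul0r -exprM => /esym/eqP; rewrite subr_eq0 eq_sym.
by apply/negP/hq; rewrite muln_gt0.
Qed.

Lemma qfact_neq0 n : qfact (q ^+ 2) n != 0.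
Proof.
elim: n => [|n IH]; first by rewrite qfact0 oner_neq0.
by rewrite qfactS mulf_neq0 // qintQ_neq0.
Qed.

Definition gb N K : F :=
  if (K <= N)%N then qfact (q ^+ 2) N / (qfact (q ^+ 2) K * qfact (q ^+ 2) (N - K)) else 0.

Lemma gb_out N K : (N < K)%N -> gb N K = 0.
Proof. by rewrite /gb ltnNge => /negbTE ->. Qed.

Lemma gbn0 N : gb N 0 = 1.
Proof. by rewrite /gb leq0n qfact0 mul1r subn0 divff // qfact_neq0. Qed.

Lemma gb_ratio N K : gb N K.+1 = qint (q ^+ 2) (N - K) / qint (q ^+ 2) K.+1 * gb N K.
Proof.
case: (ltnP K N) => h; last first.
  by rewrite gb_out ?ltnS // (_ : N - K = 0)%N ?qint0 ?mul0r //; lia.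
have [m ->] : exists m, N = (K + m.+1)%N by exists (N - K.+1)%N; lia.
rewrite /gb (_ : K.+1 <= K + m.+1)%N; last by lia.
rewrite (_ : K <= K + m.+1)%N; last by lia.
rewrite (_ : K + m.+1 - K.+1 = m)%N; last by lia.
rewrite (_ : K + m.+1 - K = m.+1)%N; last by lia.
rewrite !qfactS.
have h1 := qfact_neq0 K; have h2 := qfact_neq0 m.
have h3 := qintQ_neq0 K; have h4 := qintQ_neq0 m.
field; by rewrite h1 h2 h3 h4.
Qed.

Lemma gb_pascal N K : gb N.+1 K.+1 = gb N K.+1 + (q ^+ 2) ^+ (N - K) * gb N K.
Proof.
case: (ltnP K N) => h; last first.
  case: (ltnP N K) => h'.
    by rewrite !gb_out ?mulr0 ?addr0 // ltnS //; lia.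
  have -> : K = N by lia.
  rewrite (gb_out (ltnSn N)) subnn expr0 mul1r /gb !leqnn !subnn !qfact0 !mulr1.
  by rewrite add0r !divff ?qfact_neq0.
have [m ->] : exists m, N = (K + m.+1)%N by exists (N - K.+1)%N; lia.
rewrite /gb (_ : K.+1 <= K + m.+1)%N; last by lia.
rewrite (_ : K <= K + m.+1)%N; last by lia.
rewrite (_ : K.+1 <= (K + m.+1).+1)%N; last by lia.
rewrite (_ : K + m.+1 - K.+1 = m)%N; last by lia.
rewrite (_ : K + m.+1 - K = m.+1)%N; last by lia.
rewrite (_ : (K + m.+1).+1 - K.+1 = m.+1)%N; last by lia.
rewrite (qfactS _ (K + m.+1)) (qfactS _ K) (qfactS _ m).
rewrite (_ : (K + m.+1).+1 = m.+1 + K.+1)%N; last by lia.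
rewrite qintD.
have h1 := qfact_neq0 K; have h2 := qfact_neq0 m.
have h3 := qintQ_neq0 K; have h4 := qintQ_neq0 m.
field; by rewrite h1 h2 h3 h4.
Qed.


Lemma term l K N b :
  q ^+ (2 * (l + K).+1 * K.+1) * (qint q (2 * l + 1) * b) * gb N.+1 K.+1
  + q ^+ (2 * (l + K).+1 * K) * (q ^+ (2 * l + 1) * qint q (2 * N + 1) * b) * gb N K
  = q ^+ (2 * (l + K) + 1) * (qint q 2 * qint (q ^+ 2) (l + K).+1)
      * (q ^+ (2 * (l + K) * K) * b * gb N K)
    + qint q (2 * (l + K) + 3) * (q ^+ (2 * (l + K).+1 * K.+1) * b * gb N K.+1).
Proof.
case: (ltnP N K) => h.
  rewrite !gb_out ?ltnS //; last by lia.
  by rewrite !mulr0 addr0.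
have [M ->] : exists M, N = (K + M)%N by exists (N - K)%N; lia.
rewrite gb_pascal gb_ratio (_ : (K + M - K = M)%N); last by lia.
rewrite (_ : (2 * (l + K) + 3 = (2 * l + 1) + 2 * K.+1)%N); last by lia.
rewrite (qintD q (2 * l + 1) (2 * K.+1)) -(qint_q2 q K.+1).
have hu := qintQ_neq0 K.
set u := qint (q ^+ 2) K.+1.
set g := gb (K + M) K.
rewrite qint_q2.
have hq1 : 1 - q != 0 by rewrite -[q]expr1 onem_neq0.
have hq2 : 1 - q ^+ 2 != 0 by rewrite onem_neq0.
rewrite !(qintE _ hq1) !(qintE _ hq2).
have P : forall e m, e = m -> q ^+ e = q ^+ m by move=> ? ? ->.
rewrite (P _ ((l * K) * 2 + (K * K) * 2 + l * 2 + K * 4 + 2)%N); last by ring.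
rewrite (P (2 * (l + K).+1 * K) ((l * K) * 2 + (K * K) * 2 + K * 2)%N); last by ring.
rewrite (P (2 * l + 1) (l * 2 + 1)%N); last by ring.
rewrite (P (2 * (K + M) + 1) (K * 2 + M * 2 + 1)%N); last by ring.
rewrite (P (2 * (l + K) + 1) (l * 2 + K * 2 + 1)%N); last by ring.
rewrite (P (2 * (l + K).+1) (l * 2 + K * 2 + 2)%N); last by ring.
rewrite (P (2 * (l + K) * K) ((l * K) * 2 + (K * K) * 2)%N); last by ring.
rewrite -exprM (P (2 * M) (M * 2)%N); last by ring.
rewrite !exprD !exprM.
field.
by apply/and3P; split.
Qed.


Variable B : nat -> nat -> F.
Hypothesis hB0 : forall l, B 0 l = (l == 0%N)%:R.
Hypothesis hBs0 : forall n, B n.+1 0 = B n 0.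
Hypothesis hBsS : forall n l, B n.+1 l.+1 =
  qint q (2 * l + 3) * B n l.+1 + q ^+ (2 * l + 1) * qint q (2 * (n - l) + 1) * B n l.

Lemma Bz n l : (n < l)%N -> B n l = 0.
Proof.
elim: n l => [|n IH] [|l] //.
by rewrite ltnS => h; rewrite hBsS !IH ?mulr0 ?addr0 //; lia.
Qed.

Lemma Bexp n l : B n.+1 l = qint q (2 * l + 1) * B n l +
  (if l is l'.+1 then q ^+ (2 * l' + 1) * qint q (2 * (n - l') + 1) * B n l' else 0).
Proof.
case: l => [|l]; first by rewrite hBs0 muln0 add0n qint1 mul1r addr0.
by rewrite hBsS (_ : (2 * l.+1 + 1 = 2 * l + 3)%N) //; lia.
Qed.

Definition Rs n k := \sum_(l < k.+1) q ^+ (2 * k * (k - l)) * B n l * gb (n - l) (k - l).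

Lemma Rs_step n k : Rs n.+1 k.+1 =
  q ^+ (2 * k + 1) * (qint q 2 * qint (q ^+ 2) k.+1) * Rs n k + qint q (2 * k + 3) * Rs n k.+1.
Proof.
rewrite /Rs.
under eq_bigr do rewrite Bexp mulrDr mulrDl.
rewrite big_split /= [X in X + _ = _]big_ord_recr [X in _ + X = _]big_ord_recl /=.
rewrite mulr0 mul0r add0r.
rewrite [X in _ = _ + _ * X]big_ord_recr /= mulrDr.
set c1 := q ^+ (2 * k + 1) * _.
set c2 := qint q (2 * k + 3).
rewrite (mulr_sumr _ _ _ c1) (mulr_sumr _ _ _ c2).
rewrite addrAC -big_split /= addrA -big_split /=.
congr (_ + _); last first.
  rewrite subnn !gbn0 (_ : (2 * k.+1 + 1 = 2 * k + 3)%N); last by lia.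
  by rewrite /c2; ring.
apply: eq_bigr => -[i hi] _ /=.
rewrite /c1 /c2 /bump leq0n add0n add1n.
case: (ltnP n i) => hn.
  by rewrite Bz //; ring.
have [K eK] : exists K, k = (i + K)%N by exists (k - i)%N; lia.
have [N eN] : exists N, n = (i + N)%N by exists (n - i)%N; lia.
subst k n.
rewrite (_ : ((i + K).+1 - i = K.+1)%N); last by lia.
rewrite (_ : ((i + N).+1 - i = N.+1)%N); last by lia.
rewrite (_ : ((i + K).+1 - i.+1 = K)%N); last by lia.
rewrite (_ : ((i + N).+1 - i.+1 = N)%N); last by lia.
rewrite (_ : ((i + K) - i = K)%N); last by lia.
rewrite (_ : ((i + N) - i = N)%N); last by lia.
exact: term.
Qed.



Lemma main_alg n k :
  q ^+ (k * k) * (qint q 2 ^+ k * qfact (q ^+ 2) k * SB q n k) = Rs n k.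
Proof.
elim: n k => [|n IH] k.
  rewrite /Rs; case: k => [|k].
    by rewrite big_ord1 /= hB0 gbn0 qfact0 ?subnn ?muln0 ?mul0n !expr0 eqxx !mulr1.
  rewrite /= mulr0 mulr0 big_ord_recl /= (gb_out (ltn0Sn k)) mulr0 add0r.
  by rewrite big1 // => i _; rewrite hB0 /= mulr0 mul0r.
case: k => [|k].
  have := IH 0%N; rewrite /Rs !big_ord1 /= !mul1r !gbn0 !mulr1 hBs0 => <-.
  by rewrite add0r muln0 qint1 mul1r.
rewrite Rs_step -!IH /=.
rewrite (_ : ((2 * k.+1).+1 = 2 * k + 3)%N); last by lia.
rewrite (_ : (k.+1 * k.+1 = k * k + (2 * k + 1))%N); last by lia.
rewrite qfactS (exprS (qint q 2)).
rewrite exprD; ring.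
Qed.

End Field.

Fixpoint gsum (b : bitseq) : nat :=
  if b is x :: b' then (gsum b' + 2 * count id b')%N else 0%N.

Fixpoint bins (j : nat) (s : bool) (b : bitseq) : bitseq :=
  match j, b with
  | 0, [::] => [:: s]
  | 0, x :: b' => s :: ~~ s :: b'
  | j'.+1, [::] => [:: s]
  | j'.+1, x :: b' => x :: bins j' s b'
  end.

Section Bits.
Variable R : comNzRingType.

Lemma ins_sum (q t : R) b :
  \sum_(j < (size b).+1)
     (t ^+ count id (bins j true b) * q ^+ (gsum (bins j true b) + 1)
      + t ^+ count id (bins j false b) * q ^+ gsum (bins j false b))
  = t ^+ count id b * q ^+ gsum b *
    (qint q (2 * count id b + 1)
     + t * q ^+ (2 * count id b + 1) * qint q (2 * (size b - count id b) + 1)).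
Proof.
elim: b t => [|x b IH] t.
  by rewrite big_ord1 /= !qint1 !expr0 !expr1; ring.
rewrite big_ord_recl /=.
have E : forall j : 'I_(size b).+1,
  t ^+ count id (bins (bump 0 j) true (x :: b)) * q ^+ (gsum (bins (bump 0 j) true (x :: b)) + 1)
  + t ^+ count id (bins (bump 0 j) false (x :: b)) * q ^+ gsum (bins (bump 0 j) false (x :: b))
  = t ^+ x * ((t * q ^+ 2) ^+ count id (bins j true b) * q ^+ (gsum (bins j true b) + 1)
      + (t * q ^+ 2) ^+ count id (bins j false b) * q ^+ gsum (bins j false b)).
  move=> j; rewrite /bump leq0n add1n /=.
  rewrite !exprD !exprMn ?exprM; ring.
rewrite (eq_bigr _ (fun j _ => E j)) -mulr_sumr IH; clear E.
have hc := count_size id b.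
set c := count id b; set m := size b; set g := gsum b.
case: x => /=.
  rewrite (_ : (2 * (1 + c) + 1 = (2 * c + 1) + 2)%N); last by lia.
  rewrite (_ : (m.+1 - (1 + c) = m - c)%N); last by lia.
  rewrite (qintD q (2 * c + 1) 2) qint2 !add0n ?mulnDr !exprD !exprMn ?exprD ?(exprAC q 2); ring.
rewrite !add0n.
rewrite (_ : (m.+1 - c = (m - c).+1)%N); last by lia.
rewrite (_ : (2 * (m - c).+1 + 1 = 2 + (2 * (m - c) + 1))%N); last by lia.
rewrite (qintD q 2) qint2 ?mulnDr !exprD !exprMn ?exprD ?(exprAC q 2); ring.
Qed.

End Bits.

Fixpoint ins (j : nat) (v : int) (w : seq int) : seq int :=
  match j, w with
  | 0, _ => v :: w
  | j'.+1, [::] => [:: v]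
  | j'.+1, x :: w' => x :: ins j' v w'
  end.

Definition Dw (w : seq int) : bitseq := pairmap (fun x y => y < x) 0 w.
Definition negw (w : seq int) : nat := count (fun x => x < 0) w.
Definition desw (w : seq int) : nat := count id (Dw w).
Definition fmajw (w : seq int) : nat := (gsum (Dw w) + negw w)%N.

Lemma pairmap_ins (v : int) (s : bool) j a w :
  (forall x, x \in a :: w -> (v < x) = s /\ (x < v) = ~~ s) ->
  pairmap (fun x y => y < x) a (ins j v w) = bins j s (pairmap (fun x y => y < x) a w).
Proof.
elim: w a j => [|x w IH] a j H.
  by case: j => [|j] /=; have [-> _] := H a (mem_head _ _).
case: j => [|j] /=.
  have [-> _] := H a (mem_head _ _).
  have hx : x \in a :: x :: w by rewrite !in_cons eqxx orbT.
  by have [_ ->] := H x hx.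
congr (_ :: _); apply: IH => y hy; apply: H.
by rewrite in_cons hy orbT.
Qed.

Lemma count_ins (p : pred int) j v w : count p (ins j v w) = (p v + count p w)%N.
Proof.
elim: w j => [|x w IH] [|j] //=; rewrite ?IH; lia.
Qed.

Lemma size_ins j v w : size (ins j v w) = (size w).+1.
Proof. by elim: w j => [|x w IH] [|j] //=; rewrite IH. Qed.

Lemma Dw_ins (N : nat) (s : bool) j w :
  (forall x, x \in w -> (- (N%:Z) < x) && (x < N%:Z)) -> (0 < N)%N ->
  Dw (ins j (if s then - (N%:Z) else N%:Z) w) = bins j s (Dw w).
Proof.
move=> H hN; apply: pairmap_ins => x; rewrite in_cons => /orP [/eqP ->|/H /andP [h1 h2]].
  by case: s; split; lia.
by case: s; split; lia.
Qed.

Lemma size_Dw w : size (Dw w) = size w.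
Proof. by rewrite /Dw size_pairmap. Qed.

Lemma ins_word_sum (R : comNzRingType) (q t : R) (N : nat) w :
  (forall x, x \in w -> (- (N%:Z) < x) && (x < N%:Z)) -> (0 < N)%N ->
  \sum_(j < (size w).+1)
    (t ^+ desw (ins j (- (N%:Z)) w) * q ^+ fmajw (ins j (- (N%:Z)) w)
     + t ^+ desw (ins j N%:Z w) * q ^+ fmajw (ins j N%:Z w))
  = t ^+ desw w * q ^+ fmajw w *
    (qint q (2 * desw w + 1)
     + t * q ^+ (2 * desw w + 1) * qint q (2 * (size w - desw w) + 1)).
Proof.
move=> H hN.
have E : forall j : 'I_(size w).+1,
  t ^+ desw (ins j (- (N%:Z)) w) * q ^+ fmajw (ins j (- (N%:Z)) w)
     + t ^+ desw (ins j N%:Z w) * q ^+ fmajw (ins j N%:Z w)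
  = q ^+ negw w * (t ^+ count id (bins j true (Dw w)) * q ^+ (gsum (bins j true (Dw w)) + 1)
      + t ^+ count id (bins j false (Dw w)) * q ^+ gsum (bins j false (Dw w))).
  move=> j; rewrite /desw /fmajw /negw.
  have E1 := Dw_ins true j H hN; have E2 := Dw_ins false j H hN; simpl in E1, E2.
  rewrite E1 E2 !count_ins.
  have -> : (- (N%:Z) < 0) = true by lia.
  have -> : (N%:Z < 0) = false by lia.
  rewrite !exprD; ring.
rewrite (eq_bigr _ (fun j _ => E j)) -mulr_sumr -size_Dw ins_sum.
rewrite /fmajw /desw size_Dw exprD (exprD q (gsum _)); ring.
Qed.

From mathcomp Require Import fingroup perm.

Lemma Dw_map w : Dw w =
  map (fun i => nth 0 (0 :: w) i.+1 < nth 0 (0 :: w) i) (iota 0 (size w)).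
Proof.
apply: (@eq_from_nth _ false).
  by rewrite size_Dw size_map size_iota.
move=> i; rewrite size_Dw => hi.
by rewrite (nth_map 0%N) ?size_iota // nth_iota // /Dw (nth_pairmap 0).
Qed.

Lemma count_nth (b : bitseq) : count id b = count (nth false b) (iota 0 (size b)).
Proof. by rewrite -[in LHS](mkseq_nth false b) /mkseq count_map. Qed.

Lemma gsum_gen b m :
  (\sum_(i <- [seq i <- iota m (size b) | nth false b (i - m)]) 2 * i)%N
  = (gsum b + 2 * m * count id b)%N.
Proof.
elim: b m => [|x b IH] m; first by rewrite big_nil muln0.
rewrite /= subnn /=.
rewrite (@eq_in_filter _ _ (fun i => nth false b (i - m.+1))); last first.
  move=> i; rewrite mem_iota => /andP [h1 _].
  by rewrite (_ : (i - m = (i - m.+1).+1)%N) //; lia.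
case: x; rewrite ?big_cons IH /=; lia.
Qed.

Lemma gsum_filter b :
  (\sum_(i <- [seq i <- iota 0 (size b) | nth false b i]) 2 * i)%N = gsum b.
Proof.
have := gsum_gen b 0; rewrite muln0 mul0n addn0 => <-.
by congr (\sum_(i <- _) _); apply: eq_filter => i; rewrite subn0.
Qed.

Section SP.
Variable n : nat.

Definition sv (p : signed_perm n) (i : 'I_n) : int :=
  (if p.2 i then -1 else 1) * ((p.1 i : nat).+1)%:Z.
Definition wordp (p : signed_perm n) : seq int := [seq sv p i | i <- enum 'I_n].

Lemma size_wordp p : size (wordp p) = n.
Proof. by rewrite size_map size_enum_ord. Qed.

Lemma spval_nth p i : spval p i = nth 0 (0 :: wordp p) i.
Proof.
case: i => [|j] //=; rewrite /spval.
case: insubP => [o hj <-|hj].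
  by rewrite (nth_map o) ?size_enum_ord ?ltn_ord // nth_ord_enum.
by rewrite nth_default // size_wordp leqNgt.
Qed.

Lemma desB_w p : desB p = desw (wordp p).
Proof.
rewrite /desB /desB_set size_filter /desw Dw_map count_map size_wordp.
by apply: eq_count => i; rewrite /preim !spval_nth.
Qed.

Lemma negB_w p : negB p = negw (wordp p).
Proof.
rewrite /negB /negw count_map cardsE cardE /enum_mem size_filter /enum_mem count_filter.
apply: eq_count => i; rewrite /= !inE andbT /sv.
change (p.2 i = ((if p.2 i then -1 else 1) * ((p.1 i : nat).+1)%:Z < 0)); case: (p.2 i); lia.
Qed.

Lemma fmaj_w p : fmaj p = fmajw (wordp p).
Proof.
rewrite /fmaj /fmajw negB_w -gsum_filter size_Dw size_wordp; congr (_ + _)%N.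
congr (\sum_(i <- _) _); apply: eq_in_filter => i; rewrite mem_iota add0n => /andP [_ hi].
by rewrite Dw_map (nth_map 0%N) ?size_iota ?size_wordp // nth_iota // !spval_nth.
Qed.

End SP.

Definition JS n := [seq (j, s) | j <- iota 0 n.+1, s <- [:: true; false]].
Definition insv (N : nat) (x : nat * bool) (w : seq int) :=
  ins x.1 (if x.2 then - (N%:Z) else N%:Z) w.
Fixpoint W n : seq (seq int) :=
  if n is n'.+1 then [seq insv n x w | w <- W n', x <- JS n'] else [:: [::]].

Lemma WS n : W n.+1 = [seq insv n.+1 x w | w <- W n, x <- JS n].
Proof. by []. Qed.

Lemma size_W n : size (W n) = (n`! * 2 ^ n)%N.
Proof.
elim: n => [|n IH] //.
rewrite WS size_allpairs IH /JS size_allpairs size_iota factS expnS /=; lia.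
Qed.

Definition valid n (w : seq int) := perm_eq (map absz w) (iota 1 n).

Lemma perm_ins j v w : perm_eq (ins j v w) (v :: w).
Proof.
elim: w j => [|x w IH] [|j] //=.
apply: (@perm_trans _ (x :: v :: w)); first by rewrite perm_cons.
by apply/permPl; exact: (perm_catCA [:: x] [:: v] w).
Qed.

Lemma ins_take_drop j w : (j < size w)%N ->
  ins j (nth 0 w j) (take j w ++ drop j.+1 w) = w.
Proof.
elim: w j => [|x w IH] [|j] //=; first by rewrite drop0.
by rewrite ltnS => h; rewrite IH.
Qed.

Lemma valid_W n w : valid n w -> w \in W n.
Proof.
elim: n w => [|n IH] w.
  rewrite /valid /= => /perm_size; rewrite size_map.
  by case: w.
move=> hv.
have hs : size w = n.+1 by have := perm_size hv; rewrite size_map size_iota.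
have hN : (n.+1 \in map absz w).
  by rewrite (perm_mem hv) mem_iota; lia.
set j := find (fun x : int => absz x == n.+1) w.
have hj : (j < size w)%N by rewrite -has_find; apply/hasP; move: hN => /mapP [x hx ->]; exists x.
have hv' : absz (nth 0 w j) = n.+1.
  by apply/eqP; apply: (@nth_find _ 0 (fun x : int => absz x == n.+1)); rewrite has_find.
set w' := take j w ++ drop j.+1 w.
have ew : w = ins j (nth 0 w j) w' by rewrite ins_take_drop.
have vw' : valid n w'.
  rewrite /valid -(perm_cons n.+1).
  apply: (@perm_trans _ (map absz w)).
    by have := perm_map absz (perm_ins j (nth 0 w j) w'); rewrite -ew /= hv' perm_sym.
  apply: (@perm_trans _ (iota 1 n.+1)) => //.
  by rewrite -(addn1 n) iotaD add1n cats1 perm_rcons addn1.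
rewrite WS; apply/allpairsP; exists (w', (j, nth 0 w j < 0)) => /=; split.
- exact: IH.
- rewrite /JS; apply/allpairsP; exists (j : nat, nth 0 w j < 0) => /=; split => //.
    by rewrite in_cons mem_iota; lia.
  by case: (nth 0 w j < 0).

- rewrite /insv /= {1}ew; congr ins.
  by case: (boolP (nth 0 w j < 0)) => h; rewrite ?h ?(negbTE h); lia.
Qed.

Lemma abs_sv n (p : signed_perm n) i : absz (sv p i) = (p.1 i).+1.
Proof. by rewrite /sv; case: (p.2 i); rewrite ?mulN1r ?mul1r ?abszN. Qed.

Lemma valid_wordp n (p : signed_perm n) : valid n (wordp p).
Proof.
rewrite /valid /wordp -map_comp (eq_map (abs_sv p)).
have -> : [seq (p.1 i).+1 | i <- enum 'I_n] = map S (map val (map p.1 (enum 'I_n))).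
  by rewrite -!map_comp.
have -> : iota 1 n = map S (map val (enum 'I_n)).
  by rewrite val_enum_ord -(iotaDl 1 0).
apply: perm_map; apply: perm_map.
apply: uniq_perm; first by rewrite map_inj_uniq ?enum_uniq //; exact: perm_inj.
  exact: enum_uniq.
move=> x; rewrite mem_enum; apply/mapP; exists ((p.1)^-1 x)%g; first by rewrite mem_enum.
by rewrite permKV.
Qed.

Lemma sv_neg n (p : signed_perm n) i : (sv p i < 0) = p.2 i.
Proof. by rewrite /sv; case: (p.2 i); lia. Qed.

Lemma wordp_inj n : injective (@wordp n).
Proof.
move=> p p' h.
have H : {in enum 'I_n, sv p =1 sv p'} by apply/eq_in_map.
have H1 : forall i, p.1 i = p'.1 i.
  move=> i; apply: val_inj; apply: succn_inj.
  by rewrite -!abs_sv H // mem_enum.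
have H2 : forall i, p.2 i = p'.2 i.
  by move=> i; rewrite -!sv_neg H // mem_enum.
case: p p' H1 H2 {h H} => [s e] [s' e'] /= H1 H2.
have -> : s = s' by apply/permP => i; rewrite H1.
have -> : e = e' by apply/ffunP => i; rewrite H2.
done.
Qed.

Lemma card_sp n : #|{: signed_perm n}| = (n`! * 2 ^ n)%N.
Proof. by rewrite /signed_perm card_prod card_Sn card_ffun card_bool card_ord. Qed.

Lemma perm_W n : perm_eq (map (@wordp n) (enum {: signed_perm n})) (W n).
Proof.
have U : uniq (map (@wordp n) (enum {: signed_perm n})).
  by rewrite map_inj_uniq ?enum_uniq //; exact: wordp_inj.
have S : {subset map (@wordp n) (enum {: signed_perm n}) <= W n}.
  by move=> w /mapP [p _ ->]; apply: valid_W; apply: valid_wordp.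
have hs : (size (W n) <= size (map (@wordp n) (enum {: signed_perm n})))%N.
  by rewrite size_W size_map -cardE card_sp.
have [E1 E2] := uniq_min_size U S hs.
apply: uniq_perm => //.
by rewrite (uniq_size_uniq U E2) E1.
Qed.

Section Rec.
Variable R : comNzRingType.
Variable q : R.

Lemma desfmaj_W n : desfmaj_poly q n = \sum_(w <- W n) 'X^(desw w) * (q ^+ fmajw w)%:P.
Proof.
rewrite /desfmaj_poly -(perm_big _ (perm_W n)) big_map big_enum /=.
by apply: eq_bigr => p _; rewrite desB_w fmaj_w.
Qed.


Lemma W_valid n w : w \in W n -> valid n w.
Proof.
by rewrite -(perm_mem (perm_W n)) => /mapP [p _ ->]; apply: valid_wordp.
Qed.

Lemma W_size n w : w \in W n -> size w = n.
Proof. by move=> /W_valid /perm_size; rewrite size_map size_iota. Qed.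

Lemma W_bound n w : w \in W n ->
  forall x, x \in w -> (- ((n.+1)%:Z) < x) && (x < (n.+1)%:Z).
Proof.
move=> /W_valid hv x hx.
have : absz x \in iota 1 n by rewrite -(perm_mem hv); apply: map_f.
rewrite mem_iota; lia.
Qed.

Lemma qint_polyC m : qint (q%:P) m = (qint q m)%:P.
Proof.
rewrite /qint rmorph_sum; apply: eq_bigr => i _; by rewrite rmorphXn.
Qed.

Lemma poly_step n : desfmaj_poly q n.+1 =
  \sum_(w <- W n) 'X^(desw w) * (q ^+ fmajw w)%:P *
    ((qint q (2 * desw w + 1))%:P
     + 'X * (q ^+ (2 * desw w + 1))%:P * (qint q (2 * (n - desw w) + 1))%:P).
Proof.
rewrite desfmaj_W WS big_allpairs_dep /=.
rewrite big_seq_cond [RHS]big_seq_cond; apply: eq_bigr => w /andP [hw _].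
rewrite /JS big_allpairs_dep.
under eq_bigr do rewrite big_cons big_cons big_nil /= addr0 /insv /=.
rewrite (_ : iota 0 n.+1 = index_iota 0 (size w).+1); last first.
  by rewrite /index_iota subn0 (W_size hw).
rewrite big_mkord.
under eq_bigr do rewrite !rmorphXn.
rewrite (ins_word_sum _ _ (W_bound hw)) // (W_size hw) !qint_polyC !rmorphXn.
by [].
Qed.


Lemma Bnk_W n l : Bnk q n l = \sum_(w <- W n) (desw w == l)%:R * q ^+ fmajw w.
Proof.
rewrite /Bnk desfmaj_W coef_sum; apply: eq_bigr => w _.
by rewrite coefMC coefXn eq_sym mulrC.
Qed.

Lemma Bnk0 l : Bnk q 0 l = (l == 0%N)%:R.
Proof. by rewrite Bnk_W /= big_seq1 /desw /fmajw /= expr0 mulr1 eq_sym. Qed.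

Lemma Bnk_step n l : Bnk q n.+1 l = qint q (2 * l + 1) * Bnk q n l +
  (if l is l'.+1 then q ^+ (2 * l' + 1) * qint q (2 * (n - l') + 1) * Bnk q n l' else 0).
Proof.
rewrite {1}/Bnk poly_step coef_sum !Bnk_W.
have E : forall w : seq int,
  ('X^(desw w) * (q ^+ fmajw w)%:P *
    ((qint q (2 * desw w + 1))%:P
     + 'X * (q ^+ (2 * desw w + 1))%:P * (qint q (2 * (n - desw w) + 1))%:P))`_l
  = (desw w == l)%:R * (q ^+ fmajw w * qint q (2 * desw w + 1))
    + ((desw w).+1 == l)%:R *
       (q ^+ fmajw w * q ^+ (2 * desw w + 1) * qint q (2 * (n - desw w) + 1)).
  move=> w.
  have -> : 'X^(desw w) * (q ^+ fmajw w)%:P *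
    ((qint q (2 * desw w + 1))%:P
     + 'X * (q ^+ (2 * desw w + 1))%:P * (qint q (2 * (n - desw w) + 1))%:P)
    = (q ^+ fmajw w * qint q (2 * desw w + 1))%:P * 'X^(desw w)
      + (q ^+ fmajw w * q ^+ (2 * desw w + 1) * qint q (2 * (n - desw w) + 1))%:P
         * 'X^((desw w).+1).
    by rewrite !polyCM exprS; ring.
  by rewrite coefD !coefCM !coefXn ![(l == _)]eq_sym; ring.
rewrite (eq_bigr _ (fun w _ => E w)) big_split /=.
congr (_ + _).
  rewrite mulr_sumr; apply: eq_bigr => w _.
  by case: eqP => [->|_] /=; ring.
clear E; case: l => [|l].
  by rewrite big1 // => w _; rewrite mul0r.
rewrite Bnk_W mulr_sumr; apply: eq_bigr => w _; rewrite eqSS.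
by case: eqP => [->|_] /=; ring.
Qed.

End Rec.

Unset Implicit Arguments.

Theorem theorem1p1 (n k : nat) : (k <= n)%N ->
  let q : {fraction {poly int}} := tofrac 'X in
  qint q 2 ^+ k * qfact (q ^+ 2) k * SB q n k =
  \sum_(l < k.+1)
     q ^ ((k%:Z) * (k%:Z - 2 * (l : nat)%:Z)) * Bnk q n l
       * qbinom (q ^+ 2) (n - l) (k - l).
Proof.
move=> hk q.
have hq : forall j, (0 < j)%N -> q ^+ j != 1.
  move=> j hj; rewrite /q -tofracXn -tofrac1 tofrac_eq.
  apply/eqP => h; have := @size_polyXn int j; rewrite h size_poly1; lia.
have q0 : q != 0.
  by rewrite /q tofrac_eq0 polyX_eq0.
have hBs0 : forall n, Bnk q n.+1 0 = Bnk q n 0.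
  by move=> m; rewrite Bnk_step muln0 add0n qint1 mul1r addr0.
have hBsS : forall n l, Bnk q n.+1 l.+1 = qint q (2 * l + 3) * Bnk q n l.+1
   + q ^+ (2 * l + 1) * qint q (2 * (n - l) + 1) * Bnk q n l.
  by move=> m l; rewrite Bnk_step (_ : (2 * l.+1 + 1 = 2 * l + 3)%N) //; lia.
have M := main_alg hq (@Bnk0 _ q) hBs0 hBsS n k.
apply: (mulfI (expf_neq0 (k * k) q0)); rewrite M /Rs mulr_sumr.
apply: eq_bigr => -[l hl] _ /=.
rewrite /gb (_ : (k - l <= n - l)%N = true); last by lia.
rewrite -/(qbinom (q ^+ 2) (n - l) (k - l)).
rewrite !mulrA; congr (_ * _ * _).
congr (_ * _).
rewrite !exprnP -expfzDr //; congr (_ ^ _); nia.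
Qed.
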